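(* For every sufficiently small $\eta>0$ there exists $\nu_0>0$ such that for every $\nu\in(0,\nu_0]$ there exists $\alpha_0>0$ such that for every $\alpha\in(0,\alpha_0]$ there exists $n_0$ such that for all $n\ge n_0$: if $G$ is an $(\alpha,\eta,\nu)$-superextremal biclique on $n$ vertices with partition $V(G)=A\uplus B$ and $M$ is a matching in $G[B]$ with exactly $|B|-|A|$ edges, then $G$ has a Hamilton cycle containing all edges of $M$.
   Context: $d(v,X)$ is the number of neighbours of $v$ in $X$. A graph $G$ on $n$ vertices is an $(\alpha,\varepsilon,\nu)$-superextremal biclique if there is a partition $V(G)=A\uplus B$ with: (B1) $0\le |B|-|A|\le\alpha n$; (B2) $d(a,B)\ge(1/2-\varepsilon)n$ for all but at most $\alpha n$ vertices $a\in A$; (B3) $d(a,B)\ge\nu n$ for all $a\in A$; (B4) $d(b,A)\ge(1/2-\varepsilon)n$ for all but at most $\alpha n$ vertices $b\in B$; (B5) $d(b,A)\ge(1/4-\varepsilon)n$ for all $b\in B$; (B6) if $|A|\ne\lfloor n/2\rfloor$, then $d(b,B)\le 2\nu n$ for all $b\in B$. (Here it is applied with $\varepsilon=\eta$.) *)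

(* Defs.v *)
From HB Require Import structures.
From mathcomp Require Import all_boot all_order all_algebra.
Set Implicit Arguments. Unset Strict Implicit. Unset Printing Implicit Defensive.
Import Order.TTheory GRing.Theory Num.Theory.

(* A simple graph on vertex set 'I_n is a symmetric irreflexive relation G. *)

Definition deg (n : nat) (G : rel 'I_n) (v : 'I_n) (X : {set 'I_n}) : nat :=
  #|[set u in X | G v u]|.

Local Open Scope ring_scope.

Definition superextremal (R : archiRealFieldType) (n : nat) (G : rel 'I_n)
  (A B : {set 'I_n}) (alpha eps nu : R) : Prop :=
  [/\ A :&: B = set0 /\ A :|: B = setT,
      ((#|A| <= #|B|)%N /\ (#|B| - #|A|)%:R <= alpha * n%:R),
      #|[set a in A | (deg G a B)%:R < (2^-1 - eps) * n%:R]|%:R <= alpha * n%:R /\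
      (forall a, a \in A -> nu * n%:R <= (deg G a B)%:R),
      #|[set b in B | (deg G b A)%:R < (2^-1 - eps) * n%:R]|%:R <= alpha * n%:R /\
      (forall b, b \in B -> (4^-1 - eps) * n%:R <= (deg G b A)%:R) &
      (#|A| != n./2 -> forall b, b \in B -> (deg G b B)%:R <= 2 * nu * n%:R)].

Definition matching_in (n : nat) (G : rel 'I_n) (B : {set 'I_n})
  (M : {set {set 'I_n}}) : Prop :=
  (forall e, e \in M -> exists u v, [/\ e = [set u; v], u != v, G u v,
                                        u \in B & v \in B]) /\
  (forall e f, e \in M -> f \in M -> e != f -> [disjoint e & f]).

Definition hamilton_cycle (n : nat) (G : rel 'I_n) (c : seq 'I_n) : Prop :=
  [/\ (3 <= n)%N, uniq c, size c = n & cycle G c].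

Definition edge_of_cycle (n : nat) (c : seq 'I_n) (e : {set 'I_n}) : Prop :=
  exists u v, e = [set u; v] /\ u \in c /\ next c u = v.

(* Main.v *)
Require Import Defs.
From HB Require Import structures.
From mathcomp Require Import all_boot all_order all_algebra.
From mathcomp Require Import zify ring lra.
Set Implicit Arguments. Unset Strict Implicit. Unset Printing Implicit Defensive.
Import Order.TTheory GRing.Theory Num.Theory.

Definition consec (T : eqType) (s : seq T) (x y : T) :=
  exists q1 q2, s = q1 ++ x :: y :: q2.

Lemma consec_catl (T : eqType) (s1 s2 : seq T) x y :
  consec s1 x y -> consec (s1 ++ s2) x y.
Proof. by case=> q1 [q2 ->]; exists q1, (q2 ++ s2); rewrite -catA. Qed.

Lemma consec_catr (T : eqType) (s1 s2 : seq T) x y :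
  consec s2 x y -> consec (s1 ++ s2) x y.
Proof. by case=> q1 [q2 ->]; exists (s1 ++ q1), q2; rewrite catA. Qed.

Lemma consec_rev (T : eqType) (s : seq T) x y :
  consec s x y -> consec (rev s) y x.
Proof.
case=> q1 [q2 ->]; exists (rev q2), (rev q1).
by rewrite rev_cat !rev_cons -!cats1 -!catA.
Qed.

Lemma consec_cat (T : eqType) (s1 s2 : seq T) x y :
  consec (s1 ++ s2) x y ->
  [\/ consec s1 x y, consec s2 x y |
      exists s1' s2', s1 = rcons s1' x /\ s2 = y :: s2'].
Proof.
elim: s1 => [|z s1 IH] /=; first by move=> h; apply: Or32.
move=> [q1 [q2]]; case: q1 => [|z' q1] /= [Ez E].
  subst; case: s1 IH E => [|y' s1'] IH /= E.
    by rewrite E; apply: Or33; exists [::], q2.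
  by case: E => <- _; apply: Or31; exists [::], s1'.
have /IH : consec (s1 ++ s2) x y by exists q1, q2.
case=> [[r1 [r2 ->]]|h|[s1' [s2' [-> ->]]]].
- by apply: Or31; exists (z :: r1), r2.
- by apply: Or32.
- by apply: Or33; exists (z :: s1'), s2'.
Qed.

Lemma consec_next (T : eqType) (s : seq T) x y :
  uniq s -> consec s x y -> next s x = y.
Proof.
move=> Us [q1 [q2 E]].
rewrite -(next_rot (size q1) Us) E rot_size_cat /= eqxx //.
Qed.

Lemma consec_rot (T : eqType) (s : seq T) i x y :
  consec s x y -> y != head y (drop i s) -> consec (rot i s) x y.
Proof.
rewrite -{1}(cat_take_drop i s) /rot => h ne.
case: (consec_cat h) => [h1|h2|[s1' [s2' [_ E]]]].
- exact: consec_catr.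
- exact: consec_catl.
- by rewrite E /= eqxx in ne.
Qed.

Lemma consec_head (T : eqType) (a : T) t w :
  uniq (a :: t) -> consec (a :: t) a w -> w = head w t.
Proof.
move=> U [q1 [q2]]; case: q1 => [|z q1] /=; first by case=> ->.
case=> Ez E.
move: U; rewrite E /= => /andP [+ _]; rewrite mem_cat inE eqxx orbT //.
Qed.

Lemma consec_notlast (T : eqType) (s : seq T) z w d :
  uniq s -> consec s z w -> z != last d s.
Proof.
move=> U [q1 [q2 E]]; move: U; rewrite E cat_uniq /= => /and3P [_ _ /andP[+ _]].
rewrite last_cat /=; apply: contra => /eqP ->; rewrite mem_last //.
Qed.

Lemma consec_mem (T : eqType) (s : seq T) x y :
  consec s x y -> x \in s /\ y \in s.
Proof. by case=> q1 [q2 ->]; rewrite !mem_cat !inE !eqxx !orbT. Qed.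

Lemma count_full n (s : seq 'I_n) (P : pred 'I_n) :
  uniq s -> size s = n -> count P s = #|[set x | P x]|.
Proof.
move=> U S.
have hs : s =i enum 'I_n.
  have : #|s| = #|'I_n| by rewrite card_ord (card_uniqP U).
  move=> /subset_cardP /(_ (subset_predT _)) h x; rewrite mem_enum -h //.
rewrite ((permP (uniq_perm U (enum_uniq _) hs)) P).
rewrite cardE /enum_mem size_filter (eq_filter (a2:=predT)) // filter_predT.
by apply: eq_count => x; rewrite /= inE.
Qed.

Lemma path_restrict (T : eqType) (e e' : rel T) x t :
  path e' x t -> (forall z w, consec (x :: t) z w -> e' z w -> e z w) ->
  path e x t.
Proof.
elim: t x => [|y t IH] x //= /andP [h1 h2] h.
rewrite (h x y) //; last by exists [::], t.
apply: IH => // z w [q1 [q2 E]] ; apply: h; exists (x :: q1), q2; rewrite E //.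
Qed.

Lemma cross_exists (T : eqType) (H : rel T) (inA : pred T) (NA NB : pred T) x t :
  (forall u v, inA u -> inA v -> ~~ H u v) ->
  (forall v, NA v -> ~~ inA v) -> (forall u, NB u -> inA u) ->
  path H x t ->
  count (predC inA) t < count NA t + count NB (belast x t) ->
  exists z w, consec (x :: t) z w /\ NB z && NA w.
Proof.
move=> noAA hNA hNB; elim: t x => [|y t IH] x //= /andP [Hxy Ht] hc.
case nc: (NB x && NA y).
  by exists x, y; split=> //; exists [::], t.
have h : NA y + NB x <= ~~ inA y.
  case Ay: (inA y) => /=.
    case NAy: (NA y); first by move: (hNA _ NAy); rewrite Ay.
    case NBx: (NB x) => //; by move: (noAA _ _ (hNB _ NBx) Ay); rewrite Hxy.
  by move: nc; case: (NB x); case: (NA y).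
have : count (predC inA) t < count NA t + count NB (belast y t).
  move: hc; rewrite -addnA (addnCA (count NA t)) addnA.
  rewrite ltnNge => hc; rewrite ltnNge; apply: contra hc => hh.
  exact: leq_add h hh.
case/(IH y Ht) => z [w [hc' hzw]]; exists z, w; split=> //.
exact: (consec_catr [:: x] hc').
Qed.

Definition Ham n (M : {set {set 'I_n}}) (H : rel 'I_n) :=
  exists s : seq 'I_n, [/\ uniq s, size s = n, cycle H s &
    forall e, e \in M -> exists x y, e = [set x; y] /\ consec s x y].

Lemma Ham_sub n M (H H' : rel 'I_n) :
  (forall x y, H x y -> H' x y) -> Ham M H -> Ham M H'.
Proof.
move=> sub [s [U S C Mc]]; exists s; split=> //; exact: (sub_cycle sub C).
Qed.

Lemma cross_ham n (A B : {set 'I_n}) (M : {set {set 'I_n}}) (H : rel 'I_n)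
  (hAB : forall x, (x \in B) = (x \notin A))
  (hM : forall e, e \in M -> forall x, x \in e -> x \in B)
  (Hsym : symmetric H)
  (noAA : forall x y, x \in A -> y \in A -> ~~ H x y)
  a t b :
  a \in A -> b \in B -> uniq (a :: t) -> size (a :: t) = n -> path H a t ->
  last a t = b ->
  (forall e, e \in M -> exists x y, e = [set x; y] /\ consec (a :: t) x y) ->
  (#|B| < deg H a B + deg H b A)%N -> Ham M H.
Proof.
move=> aA bB U S P L Mc hdeg.
set NA := fun v => H a v && (v \in B).
set NB := fun u => H b u && (u \in A).
have aB : a \notin B by rewrite hAB aA.
have bA : b \notin A by rewrite -hAB.
have c1 : count NA t = deg H a B.
  have := count_full NA U S; rewrite /= /NA (negbTE aB) andbF add0n => ->.
  by rewrite /deg; apply: eq_card => x; rewrite !inE andbC.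
have c2 : count NB (belast a t) = deg H b A.
  have := count_full NB U S; rewrite lastI -cats1 count_cat L /= /NB (negbTE bA) andbF /= !addn0 => ->.
  by rewrite /deg; apply: eq_card => x; rewrite !inE andbC.
have c3 : count (predC (mem A)) t = #|B|.
  have := count_full (predC (mem A)) U S; rewrite /= aA add0n => ->.
  by apply: eq_card => x; rewrite !inE hAB.
have [z [w [hc /andP [NBz NAw]]]] : exists z w, consec (a :: t) z w /\ NB z && NA w.
  apply: (cross_exists (inA := mem A)) P _.
  - by move=> u v; apply: noAA.
  - by move=> v /andP [_]; rewrite hAB.
  - by move=> u /andP [_].
  by rewrite c1 c2 c3.
move: NBz NAw; rewrite /NB /NA => /andP [Hbz zA] /andP [Haw wB].
case: hc => q1 [q2 E].
have Lw : last w q2 = b.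
  by rewrite -L -[last a t]/(last a (a :: t)) E last_cat.
have Pq : path H w q2.
  move: P; case: q1 E => [|y q1] /= [E1 E2]; first by rewrite E2 /= => /andP [].
  by rewrite E2 cat_path /= => /and3P [_ _ /andP []].
have Prev : path H z (rev (w :: q2)).
  rewrite -[w :: q2]/(w :: q2) lastI rev_rcons /= Lw.
  rewrite -[b in path _ b _]Lw rev_path (Hsym z b) Hbz /=.
  by rewrite (eq_path (e' := H)) ?Pq // => x y; rewrite Hsym.
exists (q1 ++ z :: rev (w :: q2)); split.
- have pe : perm_eq (q1 ++ z :: rev (w :: q2)) (a :: t).
    by rewrite E perm_cat2l perm_cons perm_rev.
  by rewrite (perm_uniq pe).
- have pe : perm_eq (q1 ++ z :: rev (w :: q2)) (a :: t).
    by rewrite E perm_cat2l perm_cons perm_rev.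
  by rewrite (perm_size pe).
- rewrite (cycle_path w) last_cat /= rev_cons last_rcons.
  move: P; case: q1 E => [|y q1] /= [E1 E2].
    by move=> _; move: Prev; rewrite -E1 Hsym Haw -rev_cons.
  rewrite E2 cat_path /= => /and3P [P1 P2 _].
  rewrite -E1 Hsym Haw /= cat_path P1 /= P2 -rev_cons Prev //.
- move=> e eM; case: (Mc e eM) => [x [y [Ee hxy]]].
  have xB : x \in B by apply: (hM e eM); rewrite Ee !inE eqxx.
  rewrite E -cat_rcons in hxy.
  case: (consec_cat hxy) => [h|h|[s1' [s2' [h1 h2]]]].
  + by exists x, y; split=> //; rewrite -cat_rcons; apply: consec_catl.
  + exists y, x; split; first by rewrite Ee setUC.
    by rewrite -cat_rcons; apply: consec_catr; apply: consec_rev.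
  + case: (rcons_inj h1) => _ zx.
    by move: xB; rewrite hAB -zx zA.
Qed.

Definition addE n (H : rel 'I_n) (a b : 'I_n) : rel 'I_n :=
  fun x y => H x y || ((x == a) && (y == b)) || ((x == b) && (y == a)).

Lemma close1_aux n (A B : {set 'I_n}) (M : {set {set 'I_n}}) (H : rel 'I_n)
  (hAB : forall x, (x \in B) = (x \notin A))
  (hM : forall e, e \in M -> forall x, x \in e -> x \in B)
  (Hsym : symmetric H)
  (noAA : forall x y, x \in A -> y \in A -> ~~ H x y)
  a b (n3 : (2 < n)%N) :
  a \in A -> b \in B -> (#|B| < deg H a B + deg H b A)%N ->
  forall s, uniq s -> size s = n -> cycle (addE H a b) s ->
  (forall e, e \in M -> exists x y, e = [set x; y] /\ consec s x y) ->
  b \in s -> next s b = a -> Ham M H.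
Proof.
move=> aA bB hdeg s U S C Mc bs nb.
have bA : b \notin A by rewrite -hAB.
have ab : a != b by apply: contraNneq bA => <-.
have as_ : a \in s by rewrite -nb mem_next.
set i := index a s.
have E1 := rot_index as_; rewrite -/i in E1.
set t := drop i.+1 s ++ take i s in E1.
have U1 : uniq (a :: t) by rewrite -E1 rot_uniq.
have S1 : size (a :: t) = n by rewrite -E1 size_rot.
have C1 : cycle (addE H a b) (a :: t) by rewrite -E1 rot_cycle.
have N1 : next (a :: t) b = a by rewrite -E1 (next_rot i U).
have M1 : forall e, e \in M -> exists x y, e = [set x; y] /\ consec (a :: t) x y.
  move=> e eM; case: (Mc e eM) => x [y [Ee hxy]]; exists x, y; split=> //.
  rewrite -E1; apply: consec_rot => //.
  have hi : (i < size s)%N by rewrite /i index_mem.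
  rewrite (drop_nth a hi) nth_index //=.
  have yB : y \in B by apply: (hM e eM); rewrite Ee !inE eqxx orbT.
  by apply: contraTneq yB => ->; rewrite hAB aA.
have L1 : last a t = b.
  have : prev (a :: t) (next (a :: t) b) = b by rewrite prev_next.
  rewrite N1.
  rewrite prev_nth mem_head (memNindex (x := a) (s := t)); last first.
    by move: U1 => /= /andP [].
  by rewrite -last_nth.
move: C1; rewrite /= rcons_path => /andP [P1 _].
apply: (cross_ham hAB hM Hsym noAA aA bB U1 S1 _ L1 M1 hdeg).
apply: (path_restrict P1) => z w hzw.
rewrite /addE; case/orP => [/orP [//|/andP [/eqP za /eqP wb]]|/andP [/eqP zb /eqP wa]].
- subst z w.
  have hb := consec_head U1 hzw.
  clear E1 N1 M1 P1.
  case: t U1 S1 L1 hzw hb => [|y t'] U1 S1 L1 hzw hb.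
    by move: ab; rewrite -L1 eqxx.
  move: hb => /= hb; subst y.
  case: t' U1 S1 L1 {hzw} => [|y' t''] U1 S1 L1.
    by move: n3; rewrite -S1.
  move: U1 => /= /andP [_ /andP [+ _]].
  by rewrite -{1}L1 /= mem_last.
- have := consec_notlast a U1 hzw; by rewrite /= L1 zb eqxx.
Qed.

Lemma close1 n (A B : {set 'I_n}) (M : {set {set 'I_n}}) (H : rel 'I_n)
  (hAB : forall x, (x \in B) = (x \notin A))
  (hM : forall e, e \in M -> forall x, x \in e -> x \in B)
  (Hsym : symmetric H)
  (noAA : forall x y, x \in A -> y \in A -> ~~ H x y)
  a b (n3 : (2 < n)%N) :
  a \in A -> b \in B -> (#|B| < deg H a B + deg H b A)%N ->
  Ham M (addE H a b) -> Ham M H.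
Proof.
move=> aA bB hdeg [s [U S C Mc]].
case: (boolP [forall x, (x \in s) ==> H x (next s x)]) => [/forallP hall|].
  exists s; split=> //; apply: cycle_from_next => // x xs.
  by have := hall x; rewrite xs.
move/forallPn => [x]; rewrite negb_imply => /andP [xs nH].
have := next_cycle C xs; rewrite /addE (negbTE nH) /=.
case/orP => /andP [/eqP xa /eqP nx]; subst x.
-
  have Hs' : symmetric (addE H a b).
    move=> u v; rewrite /addE Hsym; by case: (u == a); case: (v == b); case: (u == b); case: (v == a); rewrite ?orbF ?orbT ?andbF.
  apply: (close1_aux hAB hM Hsym noAA n3 aA bB hdeg (s := rev s)).
  + by rewrite rev_uniq.
  + by rewrite size_rev.
  + by rewrite rev_cycle (eq_cycle (e' := addE H a b)) // => u v; rewrite Hs'.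
  + move=> e eM; case: (Mc e eM) => x [y [Ee hxy]]; exists y, x; split.
      by rewrite Ee setUC.
    exact: consec_rev.
  + by rewrite mem_rev -nx mem_next.
  + by rewrite (next_rev U) -nx prev_next.
- exact: (close1_aux hAB hM Hsym noAA n3 aA bB hdeg U S C Mc).
Qed.

Definition addL n (H : rel 'I_n) (l : seq ('I_n * 'I_n)) : rel 'I_n :=
  fun x y => H x y || ((x, y) \in l) || ((y, x) \in l).

Lemma deg_sub n (H H' : rel 'I_n) a X :
  (forall x y, H x y -> H' x y) -> (deg H a X <= deg H' a X)%N.
Proof.
move=> sub; apply: subset_leq_card; apply/subsetP => u; rewrite !inE.
by case/andP => -> /sub ->.
Qed.

Lemma closeL n (A B : {set 'I_n}) (M : {set {set 'I_n}}) (H : rel 'I_n)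
  (hAB : forall x, (x \in B) = (x \notin A))
  (hM : forall e, e \in M -> forall x, x \in e -> x \in B)
  (Hsym : symmetric H)
  (noAA : forall x y, x \in A -> y \in A -> ~~ H x y)
  (n3 : (2 < n)%N) l :
  (forall p, p \in l -> [/\ p.1 \in A, p.2 \in B &
       (#|B| < deg H p.1 B + deg H p.2 A)%N]) ->
  Ham M (addL H l) -> Ham M H.
Proof.
elim: l => [|p l IH] hl.
  by apply: Ham_sub => x y; rewrite /addL !in_nil !orbF.
move=> hH; apply: IH => [q ql|]; first by apply: hl; rewrite inE ql orbT.
have [pA pB pdeg] := hl p (mem_head _ _).
have sub : forall x y, H x y -> addL H l x y by move=> x y; rewrite /addL => ->.
apply: (close1 (a := p.1) (b := p.2) hAB hM _ _ n3 pA pB).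
- by move=> x y; rewrite /addL Hsym orbAC.
- move=> x y xA yA; rewrite /addL negb_or negb_or noAA //=.
  apply/andP; split; apply/negP => h.
  + have := hl (x, y); rewrite inE h orbT => /(_ isT) [_ /=].
    by rewrite hAB yA.
  + have := hl (y, x); rewrite inE h orbT => /(_ isT) [_ /=].
    by rewrite hAB xA.
- apply: leq_trans pdeg _; apply: leq_add; exact: deg_sub.
- apply: Ham_sub hH => x y; rewrite /addL /addE inE inE.
  case: p {hl pA pB pdeg} => p1 p2; rewrite !xpair_eqE.
  by case: (H x y); case: ((x, y) \in l); case: ((y, x) \in l); case: (x == p1); case: (y == p2); case: (x == p2); case: (y == p1).
Qed.

Definition addR n (H : rel 'I_n) (SA SB : {set 'I_n}) : rel 'I_n :=
  fun x y => H x y || ((x \in SA) && (y \in SB)) || ((y \in SA) && (x \in SB)).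

Lemma closeR n (A B : {set 'I_n}) (M : {set {set 'I_n}}) (H : rel 'I_n)
  (hAB : forall x, (x \in B) = (x \notin A))
  (hM : forall e, e \in M -> forall x, x \in e -> x \in B)
  (Hsym : symmetric H)
  (noAA : forall x y, x \in A -> y \in A -> ~~ H x y)
  (n3 : (2 < n)%N) (SA SB : {set 'I_n}) :
  (forall x, x \in SA -> x \in A) -> (forall x, x \in SB -> x \in B) ->
  (forall a b, a \in SA -> b \in SB -> (#|B| < deg H a B + deg H b A)%N) ->
  Ham M (addR H SA SB) -> Ham M H.
Proof.
move=> sA sB hd hH.
set l := [seq (x, y) | x <- enum SA, y <- enum SB].
have meml : forall x y, ((x, y) \in l) = (x \in SA) && (y \in SB).
  move=> x y; apply/idP/idP.
    by case/allpairsP => [[u v] /= [uS vS [-> ->]]]; rewrite mem_enum in uS; rewrite mem_enum in vS; rewrite uS vS.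
  by case/andP => xS yS; apply: allpairs_f; rewrite mem_enum.
apply: (closeL hAB hM Hsym noAA n3 (l := l)).
  move=> [x y] /=; rewrite meml => /andP [xS yS]; split; [exact: sA | exact: sB | exact: hd].
apply: Ham_sub hH => x y; rewrite /addR /addL !meml //.
Qed.

Fixpoint build (T : Type) (la : seq T) (lm : seq (T * T)) (ls : seq T) : seq T :=
  match la with
  | [::] => [::]
  | a :: la' =>
    match lm with
    | (u, v) :: lm' => a :: u :: v :: build la' lm' ls
    | [::] => match ls with
              | s :: ls' => a :: s :: build la' [::] ls'
              | [::] => [:: a]
              end
    end
  end.

Definition flat (T : Type) (lm : seq (T * T)) := flatten [seq [:: p.1; p.2] | p <- lm].

Lemma build_count (T : eqType) (la : seq T) lm ls (P : pred T) :
  size la = size lm + size ls ->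
  count P (build la lm ls) = count P la + count P (flat lm) + count P ls.
Proof.
elim: la lm ls => [|a la IH] lm ls /=.
  by case: lm => // ; case: ls.
case: lm => [|[u v] lm] /=.
  case: ls => [|s ls] //= [hs].
  rewrite IH //= /flat /=; lia.
move=> [hs]; rewrite IH // /flat /= -/(flat lm); lia.
Qed.

Lemma build_perm (T : eqType) (la : seq T) lm ls :
  size la = size lm + size ls -> perm_eq (build la lm ls) (la ++ flat lm ++ ls).
Proof.
by move=> hs; apply/permP => P; rewrite build_count // !count_cat addnA.
Qed.

Lemma path_build (T : eqType) (K : rel T) (inA inB : pred T) la lm ls :
  (forall a b, inA a -> inB b -> K a b && K b a) ->
  (forall p, p \in lm -> [&& K p.1 p.2, inB p.1 & inB p.2]) ->
  all inA la -> all inB ls ->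
  size la = size lm + size ls ->
  forall x, inB x -> path K x (build la lm ls) && inB (last x (build la lm ls)).
Proof.
move=> hK; elim: la lm ls => [|a la IH] lm ls hlm /= hla hls hs x xB //=.
move: hla => /andP [aA hla].
case: lm hlm hs => [|[u v] lm] hlm /= hs.
  case: ls hls hs => [|s ls] //= /andP [sB hls] [hs].
  have /andP [_ -> ] := hK a x aA xB.
  have /andP [-> _] := hK a s aA sB.
  by apply: IH.
move: (hlm (u, v) (mem_head _ _)) => /= /and3P [Kuv uB vB].
have /andP [_ ->] := hK a x aA xB.
have /andP [-> _] := hK a u aA uB.
rewrite Kuv /=; apply: IH => //.
- by move=> p pl; apply: hlm; rewrite inE pl orbT.
- by case: hs.
Qed.

Lemma consec_build (T : eqType) (la : seq T) lm ls u v :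
  size la = size lm + size ls -> (u, v) \in lm -> consec (build la lm ls) u v.
Proof.
elim: la lm ls => [|a la IH] lm ls /=.
  by case: lm.
case: lm => [|[u' v'] lm] //= [hs].
rewrite inE => /orP [/eqP [-> ->]|h].
  by exists [:: a], (build la lm ls).
have := IH lm ls hs h; exact: (consec_catr [:: a; u'; v']).
Qed.

Lemma size_flat (T : Type) (lm : seq (T * T)) : size (flat lm) = (2 * size lm)%N.
Proof. by elim: lm => //= p lm IH; rewrite /flat /= -/(flat lm) IH; lia. Qed.

Lemma uniq_flatM n (f g : {set 'I_n} -> 'I_n) (l : seq {set 'I_n}) :
  uniq l -> (forall e, e \in l -> [/\ f e \in e, g e \in e & f e != g e]) ->
  (forall e e', e \in l -> e' \in l -> e != e' -> [disjoint e & e']) ->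
  uniq (flatten [seq [:: f e; g e] | e <- l]).
Proof.
elim: l => [|e l IH] //= /andP [el Ul] hfg hd.
have [fe ge fg] := hfg e (mem_head _ _).
have notin : forall x, x \in e -> x \notin flatten [seq [:: f e0; g e0] | e0 <- l].
  move=> x xe; apply/negP => /flattenP [s /mapP [e' e'l ->] xs].
  have e'in : e' \in e :: l by rewrite inE e'l orbT.
  have ne : e != e' by apply: contraNneq el => ->.
  have dj := hd e e' (mem_head _ _) e'in ne.
  have xe' : x \in e' by move: xs; rewrite !inE => /orP [/eqP -> | /eqP ->]; [case: (hfg e' e'in) | case: (hfg e' e'in)].
  by move: (disjointFr dj xe); rewrite xe'.
rewrite inE negb_or fg notin //= notin //=.
apply: IH => //.
- by move=> e0 e0l; apply: hfg; rewrite inE e0l orbT.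
- by move=> e0 e1 e0l e1l; apply: hd; rewrite inE ?e0l ?e1l orbT.
Qed.

Lemma arith (a b m s n : nat) : (a + b = n)%N -> (a <= b)%N -> m = (b - a)%N ->
  (a + (2 * m + s) = n)%N -> a = (m + s)%N.
Proof. lia. Qed.

Lemma complete_ham n (A B : {set 'I_n}) (M : {set {set 'I_n}}) :
  (forall x, (x \in B) = (x \notin A)) ->
  (forall e, e \in M -> exists u v, [/\ e = [set u; v], u != v, u \in B & v \in B]) ->
  (forall e f, e \in M -> f \in M -> e != f -> [disjoint e & f]) ->
  (2 < n)%N -> (#|A| + #|B| = n)%N -> (#|A| <= #|B|)%N -> #|M| = (#|B| - #|A|)%N ->
  Ham M (fun x y => ((x \in A) && (y \in B)) || ((y \in A) && (x \in B)) || ([set x; y] \in M)).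
Proof.
move=> hAB hM hdis n3 hn hle hk.
have n0 : (0 < n)%N by apply: leq_trans n3.
set d := Ordinal n0.
set pk := fun e : {set 'I_n} => odflt d [pick x in e].
set pk2 := fun e : {set 'I_n} => odflt d [pick x in e | x != pk e].
have hpk : forall e, e \in M -> [/\ pk e \in e, pk2 e \in e, pk e != pk2 e &
                                   e = [set pk e; pk2 e]].
  move=> e eM; have [u [v [Ee uv uB vB]]] := hM e eM.
  have pke : pk e \in e.
    rewrite /pk; case: pickP => [x xe //|no].
    by have := no u; rewrite Ee !inE eqxx.
  have ue : u \in e by rewrite Ee !inE eqxx.
  have ve : v \in e by rewrite Ee !inE eqxx orbT.
  have pk2e : pk2 e \in e /\ pk2 e != pk e.
    rewrite /pk2; case: pickP => [x /andP [xe xn] //|no].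
    case: (boolP (pk e == u)) => [/eqP h|h].
      by have := no v; rewrite ve /= h eq_sym uv.
    by have := no u; rewrite ue /= eq_sym h.
  case: pk2e => pk2e ne; split => //; first by rewrite eq_sym.
  have hu : forall z, z \in e -> (z == u) || (z == v) by move=> z; rewrite Ee !inE.
  move: (hu _ pke) (hu _ pk2e) ne => /orP [/eqP h1 | /eqP h1] /orP [/eqP h2 | /eqP h2];
    rewrite h1 h2 ?eqxx // => _; rewrite Ee // setUC //.
set lm := [seq (pk e, pk2 e) | e <- enum M].
set fl := flat lm.
set ls := [seq x <- enum B | x \notin fl].
set la := enum A.
have flM : forall x, x \in fl -> exists2 e, e \in M & x \in e.
  move=> x /flattenP [s /mapP [p /mapP [e eM ->] ->] xs].
  rewrite mem_enum in eM; exists e => //.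
  have [? ? _ _] := hpk e eM.
  by move: xs; rewrite !inE => /orP [/eqP ->|/eqP ->].
have flB : forall x, x \in fl -> x \in B.
  move=> x /flM [e eM xe]; have [u [v [Ee _ uB vB]]] := hM e eM.
  by move: xe; rewrite Ee !inE => /orP [/eqP ->|/eqP ->].
have Ufl : uniq fl.
  rewrite /fl /flat /lm -map_comp.
  apply: uniq_flatM; first exact: enum_uniq.
    by move=> e; rewrite mem_enum => /hpk [].
  by move=> e e'; rewrite !mem_enum; apply: hdis.
have Uall : uniq (la ++ fl ++ ls).
  rewrite cat_uniq enum_uniq /=; apply/andP; split.
    apply/hasPn => x; rewrite mem_cat mem_enum => /orP [/flB|].
      by rewrite hAB.
    by rewrite mem_filter mem_enum hAB => /andP [_].
  rewrite cat_uniq Ufl filter_uniq ?enum_uniq // andbT.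
  by apply/hasPn => x; rewrite mem_filter => /andP [].
have Mall : forall x, x \in la ++ fl ++ ls.
  move=> x; rewrite !mem_cat /la /ls (mem_enum (mem A)) mem_filter (mem_enum (mem B)).
  case: (boolP (x \in A)) => //= xA; rewrite -hAB in xA; rewrite xA.
  by case: (x \in fl).
have Sall : size (la ++ fl ++ ls) = n.
  rewrite -(card_uniqP Uall).
  rewrite (eq_cardT (T := 'I_n)) ?size_enum_ord // => x; rewrite Mall.
have hs : size la = (size lm + size ls)%N.
  move: Sall; rewrite !size_cat size_flat /la /lm size_map -!cardE => h.
  exact: (arith hn hle hk h).
set c := build la lm ls.
have pc := build_perm hs.
exists c; split.
- by rewrite (perm_uniq pc).
- by rewrite (perm_size pc).
- have [b bB] : exists b, b \in B.
    by apply/card_gt0P; lia.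
  have hK : forall a b, a \in A -> b \in B -> 
    (fun x y => ((x \in A) && (y \in B)) || ((y \in A) && (x \in B)) || ([set x; y] \in M)) a b &&
    (fun x y => ((x \in A) && (y \in B)) || ((y \in A) && (x \in B)) || ([set x; y] \in M)) b a.
    by move=> a b0 aA b0B; rewrite aA b0B /= orbT.
  have hlm : forall p, p \in lm -> [&& 
    (fun x y => ((x \in A) && (y \in B)) || ((y \in A) && (x \in B)) || ([set x; y] \in M)) p.1 p.2, 
    p.1 \in B & p.2 \in B].
    move=> p /mapP [e eM ->] /=; rewrite mem_enum in eM.
    have [pke pk2e _ Ee] := hpk e eM.
    have [u [v [Ee' _ uB vB]]] := hM e eM.
    have inB : forall z, z \in e -> z \in B.
      by move=> z; rewrite Ee' !inE => /orP [/eqP ->|/eqP ->].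
    by rewrite -Ee eM orbT /= !inB.
  have hla : all (mem A) la by apply/allP => x; rewrite mem_enum.
  have hls : all (mem B) ls by apply/allP => x; rewrite mem_filter mem_enum => /andP [].
  have := path_build hK hlm hla hls hs bB => /andP [_ lB].
  have := path_build hK hlm hla hls hs lB => /andP [P _].
  by rewrite (cycle_path b).
- move=> e eM; have [_ _ _ Ee] := hpk e eM.
  exists (pk e), (pk2 e); split => //.
  apply: consec_build => //.
  by apply/mapP; exists e; rewrite ?mem_enum.
Qed.

Lemma addR_sym n (H : rel 'I_n) (SA SB : {set 'I_n}) : symmetric H -> symmetric (addR H SA SB).
Proof.
move=> hs x y; rewrite /addR hs.
by case: (H y x); case: (x \in SA); case: (y \in SB); case: (y \in SA); case: (x \in SB).
Qed.

Lemma addR_noAA n (A B : {set 'I_n}) (H : rel 'I_n) (SA SB : {set 'I_n}) :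
  (forall x, (x \in B) = (x \notin A)) ->
  (forall x, x \in SB -> x \in B) ->
  (forall x y, x \in A -> y \in A -> ~~ H x y) ->
  (forall x y, x \in A -> y \in A -> ~~ addR H SA SB x y).
Proof.
move=> hAB sB noAA x y xA yA; rewrite /addR (negbTE (noAA x y xA yA)) /=.
have nx : x \notin SB by apply: contraL xA => /sB; rewrite hAB.
have ny : y \notin SB by apply: contraL yA => /sB; rewrite hAB.
by rewrite (negbTE nx) (negbTE ny) !andbF.
Qed.

Lemma addR_sub n (H : rel 'I_n) (SA SB : {set 'I_n}) x y : H x y -> addR H SA SB x y.
Proof. by rewrite /addR => ->. Qed.

Lemma addR_in n (H : rel 'I_n) (SA SB : {set 'I_n}) x y :
  x \in SA -> y \in SB -> addR H SA SB x y && addR H SA SB y x.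
Proof. by move=> hx hy; rewrite /addR hx hy /= !orbT. Qed.

Lemma deg_ge_card n (H : rel 'I_n) b (X S : {set 'I_n}) :
  (forall u, u \in S -> (u \in X) && H b u) -> (#|S| <= deg H b X)%N.
Proof.
move=> h; apply: subset_leq_card; apply/subsetP => u uS; rewrite inE; exact: h.
Qed.

Lemma set2_eq (T : finType) (x y u v : T) :
  u != v -> [set x; y] = [set u; v] -> (x = u /\ y = v) \/ (x = v /\ y = u).
Proof.
move=> uv E.
have ux : u \in [set x; y] by rewrite E !inE eqxx.
have vx : v \in [set x; y] by rewrite E !inE eqxx orbT.
have xu : x \in [set u; v] by rewrite -E !inE eqxx.
have yu : y \in [set u; v] by rewrite -E !inE eqxx orbT.
move: ux vx; rewrite !inE => /orP[/eqP h1|/eqP h1] /orP[/eqP h2|/eqP h2].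
- by move: uv; rewrite h1 h2 eqxx.
- by left.
- by right.
- by move: uv; rewrite h1 h2 eqxx.
Qed.

Lemma deg_sub_in n (H H' : rel 'I_n) a (X : {set 'I_n}) :
  (forall u, u \in X -> H a u -> H' a u) -> (deg H a X <= deg H' a X)%N.
Proof.
move=> sub; apply: subset_leq_card; apply/subsetP => u; rewrite !inE.
by case/andP => uX /(sub _ uX) ->; rewrite uX.
Qed.

Local Open Scope ring_scope.

Lemma st1 (R : realFieldType) (N a b d1 d2 eta alpha : R) :
  0 < N -> 0 < eta -> eta <= 16^-1 -> 0 < alpha -> alpha <= 128^-1 ->
  a + b = N -> b - a <= alpha * N ->
  (2^-1 - eta) * N <= d1 -> (2^-1 - eta) * N <= d2 -> b < d1 + d2.
Proof. move=> *; nra. Qed.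

Lemma st2 (R : realFieldType) (N a b d1 d2 nu alpha : R) :
  0 < N -> 0 < nu -> alpha <= nu / 8 ->
  b - a <= alpha * N -> nu * N <= d1 -> a - alpha * N <= d2 -> b < d1 + d2.
Proof. move=> *; nra. Qed.

Lemma st3 (R : realFieldType) (N b d1 d2 eta alpha : R) :
  0 < N -> eta <= 16^-1 -> alpha <= 128^-1 ->
  b - alpha * N <= d1 -> (4^-1 - eta) * N <= d2 -> b < d1 + d2.
Proof. move=> *; nra. Qed.

Lemma st4 (R : realFieldType) (N a b d1 d2 alpha : R) :
  0 < N -> alpha <= 128^-1 ->
  a + b = N -> b - a <= alpha * N ->
  b - alpha * N <= d1 -> a - alpha * N <= d2 -> b < d1 + d2.
Proof. move=> *; nra. Qed.

Lemma nat_lt_of_real (R : realFieldType) (m d1 d2 : nat) :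
  (m%:R < d1%:R + d2%:R :> R) -> (m < d1 + d2)%N.
Proof. by rewrite -natrD ltr_nat. Qed.

Unset Implicit Arguments.

Theorem mainTheorem13 (R : archiRealFieldType) :
  exists eta0 : R, 0 < eta0 /\
  forall eta : R, 0 < eta -> eta <= eta0 ->
  exists nu0 : R, 0 < nu0 /\
  forall nu : R, 0 < nu -> nu <= nu0 ->
  exists alpha0 : R, 0 < alpha0 /\
  forall alpha : R, 0 < alpha -> alpha <= alpha0 ->
  exists n0 : nat, forall n : nat, (n0 <= n)%N ->
  forall (G : rel 'I_n), symmetric G -> irreflexive G ->
  forall (A B : {set 'I_n}) (M : {set {set 'I_n}}),
    superextremal G A B alpha eta nu ->
    matching_in G B M ->
    #|M| = (#|B| - #|A|)%N ->
    exists c : seq 'I_n, hamilton_cycle G c /\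
      (forall e, e \in M -> edge_of_cycle c e).
Proof.
exists 16^-1; split; first by rewrite invr_gt0.
move=> eta eta0 etale; exists 16^-1; split; first by rewrite invr_gt0.
move=> nu nu0 nule; exists (nu / 8); split; first by rewrite divr_gt0.
move=> alpha al0 alle.
have al128 : alpha <= 128^-1 by lra.
exists 3%N => n n3 G Gsym Girr A B M
  [[AB1 AB2] [hle hk] [hB2 hB3] [hB4 hB5] _] [hmat hdis] hcard.
have hAB : forall x, (x \in B) = (x \notin A).
  move=> x; apply/idP/idP => [xB|xA].
    apply/negP => xA; have : x \in A :&: B by rewrite inE xA xB.
    by rewrite AB1 inE.
  have : x \in A :|: B by rewrite AB2 inE.
  by rewrite inE (negbTE xA).
have hn : (#|A| + #|B| = n)%N.
  by rewrite -cardsUI AB1 AB2 cards0 cardsT card_ord addn0.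
have hM : forall e, e \in M -> forall x, x \in e -> x \in B.
  move=> e eM x; have [u [v [-> _ _ uB vB]]] := hmat e eM.
  by rewrite !inE => /orP [/eqP ->|/eqP ->].
have hMs : forall e, e \in M -> exists u v, [/\ e = [set u; v], u != v, u \in B & v \in B].
  by move=> e eM; have [u [v [-> ? _ ? ?]]] := hmat e eM; exists u, v.
have n3' : (2 < n)%N by [].
set N : R := n%:R.
have N0 : 0 < N by rewrite /N ltr0n; apply: leq_trans n3.
set H0 : rel 'I_n := fun x y => ((x \in A) && (y \in B) && G x y) ||
   ((x \in B) && (y \in A) && G x y) || ([set x; y] \in M).
have H0G : forall x y, H0 x y -> G x y.
  move=> x y; rewrite /H0 => /orP [/orP [/andP [_ //]|/andP [_ //]]|xyM].
  have [u [v [Ee uv Guv _ _]]] := hmat _ xyM.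
  by case: (set2_eq uv Ee) => [[-> ->] | [-> ->]] //; rewrite Gsym.
have H0sym : symmetric H0.
  move=> x y; rewrite /H0 [[set x; y]]setUC (Gsym x y).
  by case: (x \in A); case: (x \in B); case: (y \in A); case: (y \in B); case: (G y x); case: ([set y; x] \in M).
have H0noAA : forall x y, x \in A -> y \in A -> ~~ H0 x y.
  move=> x y xA yA; apply/negP; rewrite /H0 !hAB xA yA /= => h.
  by move: (hM _ h x); rewrite !inE eqxx hAB xA => /(_ isT).
set XA := [set a in A | (deg G a B)%:R < (2^-1 - eta) * N].
set XB := [set b in B | (deg G b A)%:R < (2^-1 - eta) * N].
set TA := A :\: XA.
set TB := B :\: XB.
have TAA : forall x, x \in TA -> x \in A by move=> x; rewrite inE => /andP [].
have TBB : forall x, x \in TB -> x \in B by move=> x; rewrite inE => /andP [].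
have tA : forall a, a \in TA -> (2^-1 - eta) * N <= (deg G a B)%:R.
  by move=> a; rewrite !inE => /andP [h aA]; move: h; rewrite aA /= -leNgt.
have tB : forall b, b \in TB -> (2^-1 - eta) * N <= (deg G b A)%:R.
  by move=> b; rewrite !inE => /andP [h bB]; move: h; rewrite bB /= -leNgt.
have cTA : #|A|%:R - alpha * N <= #|TA|%:R :> R.
  have sub : XA \subset A by apply/subsetP => x; rewrite inE => /andP [].
  have e : (#|TA| + #|XA| = #|A|)%N.
    by rewrite /TA cardsD (setIidPr sub) subnK // subset_leq_card.
  have : (#|TA| + #|XA|)%:R = #|A|%:R :> R by rewrite e.
  rewrite natrD => e'; move: hB2; rewrite -/XA => h; lra.
have cTB : #|B|%:R - alpha * N <= #|TB|%:R :> R.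
  have sub : XB \subset B by apply/subsetP => x; rewrite inE => /andP [].
  have e : (#|TB| + #|XB| = #|B|)%N.
    by rewrite /TB cardsD (setIidPr sub) subnK // subset_leq_card.
  have : (#|TB| + #|XB|)%:R = #|B|%:R :> R by rewrite e.
  rewrite natrD => e'; move: hB4; rewrite -/XB => h; lra.
have hkR : #|B|%:R - #|A|%:R <= alpha * N :> R by move: hk; rewrite natrB.
have hnR : #|A|%:R + #|B|%:R = N :> R by rewrite -natrD hn.
set H1 := addR H0 TA TB.
set H2 := addR H1 A TB.
set H3 := addR H2 TA B.
set H4 := addR H3 A B.
have H1sym : symmetric H1 by apply: addR_sym.
have H2sym : symmetric H2 by apply: addR_sym.
have H3sym : symmetric H3 by apply: addR_sym.
have H1noAA : forall x y, x \in A -> y \in A -> ~~ H1 x y by apply: addR_noAA.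
have H2noAA : forall x y, x \in A -> y \in A -> ~~ H2 x y by apply: addR_noAA.
have H3noAA : forall x y, x \in A -> y \in A -> ~~ H3 x y by apply: addR_noAA.
have K4 : Ham M H4.
  apply: Ham_sub (complete_ham hAB hMs hdis n3' hn hle hcard).
  move=> x y /orP [/orP [/andP [xA yB]| /andP [yA xB]] | xyM].
  - by have /andP [h _] := addR_in H3 xA yB.
  - by have /andP [_ h] := addR_in H3 yA xB.
  - by do 4 apply: addR_sub; rewrite /H0 xyM !orbT.
have K3 : Ham M H3.
  apply: (closeR hAB hM H3sym H3noAA n3' (SA := A) (SB := B)) => // a b aA bB.
  apply: (nat_lt_of_real (R := R)); apply: (st4 N0 al128 hnR hkR).
  - apply: le_trans cTB _; rewrite ler_nat; apply: deg_ge_card => u uT.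
    rewrite (TBB u uT) /=; apply: addR_sub.
    by have /andP [h _] := addR_in H1 aA uT.
  - apply: le_trans cTA _; rewrite ler_nat; apply: deg_ge_card => u uT.
    rewrite (TAA u uT) /=.
    by have /andP [_ h] := addR_in H2 uT bB.
have K2 : Ham M H2.
  apply: (closeR hAB hM H2sym H2noAA n3' (SA := TA) (SB := B)) => // a b aT bB.
  apply: (nat_lt_of_real (R := R)); apply: (st3 N0 etale al128).
  - apply: le_trans cTB _; rewrite ler_nat; apply: deg_ge_card => u uT.
    rewrite (TBB u uT) /=.
    by have /andP [h _] := addR_in H1 (TAA a aT) uT.
  - apply: le_trans (hB5 b bB) _; rewrite ler_nat; apply: deg_sub_in => u uA h.
    by do 2 apply: addR_sub; rewrite /H0 bB uA h /= orbT.
have K1 : Ham M H1.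
  apply: (closeR hAB hM H1sym H1noAA n3' (SA := A) (SB := TB)) => // a b aA bT.
  apply: (nat_lt_of_real (R := R)); apply: (st2 N0 nu0 alle hkR).
  - apply: le_trans (hB3 a aA) _; rewrite ler_nat; apply: deg_sub_in => u uB h.
    by apply: addR_sub; rewrite /H0 aA uB h.
  - apply: le_trans cTA _; rewrite ler_nat; apply: deg_ge_card => u uT.
    rewrite (TAA u uT) /=.
    by have /andP [_ h] := addR_in H0 uT bT.
have K0 : Ham M H0.
  apply: (closeR hAB hM H0sym H0noAA n3' (SA := TA) (SB := TB)) => // a b aT bT.
  apply: leq_trans (_ : (#|B| < deg G a B + deg G b A)%N) _.
    apply: (nat_lt_of_real (R := R)).
    exact: (st1 N0 eta0 etale al0 al128 hnR hkR (tA a aT) (tB b bT)).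
  apply: leq_add; apply: deg_sub_in => u uX h.
    by rewrite /H0 (TAA a aT) uX h.
  by rewrite /H0 (TBB b bT) uX h /= orbT.
have [s [U S C Mc]] := K0.
exists s; split.
  split => //; exact: (sub_cycle H0G C).
move=> e eM; have [x [y [Ee hc]]] := Mc e eM; exists x, y; split => //; split.
  exact: (consec_mem hc).1.
exact: consec_next.
Qed.
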